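(* Let $X_0,X_1,\dots,X_N$ be vectors in $\mathbf{R}^m$ such that (1) $X_0=0$; (2) for each $1\le t\le N$, $X_t$ and $X_{t-1}$ differ in exactly one coordinate, by $+1$ or $-1$; (3) for every $1\le i\le m$ there exists $t$ such that $X_t$ and $X_{t-1}$ differ in the $i$-th coordinate. Then there is a subset $X_{t_1},\dots,X_{t_m}$ of these vectors that forms a basis of $\mathbf{R}^m$. *)

(* Defs.v *)
From HB Require Import structures.
From mathcomp Require Import all_boot all_order all_algebra.
From mathcomp Require Import reals.
Set Implicit Arguments.
Unset Strict Implicit.
Unset Printing Implicit Defensive.
Import Order.TTheory GRing.Theory Num.Theory.

(* Main.v *)
Require Import Defs.
From HB Require Import structures.
From mathcomp Require Import all_boot all_order all_algebra.
From mathcomp Require Import reals.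
Import Order.TTheory GRing.Theory Num.Theory.
Local Open Scope ring_scope.

Lemma extract_free (K : fieldType) (vT : vectType K) (I : eqType) (X : I -> vT)
  (s : seq I) : exists T : seq I, free (map X T) /\ (<<map X T>> = <<map X s>>)%VS.
Proof.
elim: s => [|a s [T [fT sT]]].
  by exists [::]; split => //; rewrite /free /= span_nil dimv0.
case: (boolP (X a \in <<map X T>>%VS)) => Ha.
  exists T; split => //; rewrite /= span_cons -sT; apply/esym/addv_idPr.
  by rewrite -memvE.
by exists (a :: T); split; rewrite /= ?free_cons ?Ha ?fT // !span_cons sT.
Qed.

Theorem lemma4p1 (R : realType) (m N : nat) (X : nat -> 'rV[R]_m) :
  X 0%N = 0 ->
  (forall t : nat, (1 <= t <= N)%N ->
     exists i : 'I_m,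
       (X t ord0 i - X t.-1 ord0 i = 1 \/ X t ord0 i - X t.-1 ord0 i = -1) /\
       (forall j : 'I_m, j != i -> X t ord0 j = X t.-1 ord0 j)) ->
  (forall i : 'I_m, exists t : nat, (1 <= t <= N)%N /\ X t ord0 i != X t.-1 ord0 i) ->
  exists f : 'I_m -> 'I_N.+1,
    injective f /\
    basis_of fullv [seq X (nat_of_ord (f k)) | k <- enum 'I_m].
Proof.
move=> X0 Hstep Hcov.
pose Y (t : 'I_N.+1) := X t.
have memY : forall t, (t <= N)%N -> X t \in <<map Y (enum 'I_N.+1)>>%VS.
  move=> t tN; apply: memv_span; apply/mapP; exists (Ordinal (tN : t < N.+1)%N) => //.
  by rewrite mem_enum.
have full : <<map Y (enum 'I_N.+1)>>%VS = fullv.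
  apply/eqP; rewrite eqEsubv subvf /=; apply/subvP => v _.
  rewrite (row_sum_delta v); apply: memv_suml => i _; apply: memvZ.
  have [t [/andP [t1 tN] Hne]] := Hcov i.
  have [j [Hj Hoth]] := Hstep t (introT andP (conj t1 tN)).
  have eji : j = i.
    by apply/eqP; apply: contraNT Hne => /eqP nij; rewrite Hoth // eq_sym; apply/eqP.
  subst j.
  have Hd : X t - X t.-1 \in <<map Y (enum 'I_N.+1)>>%VS.
    apply: memvB; apply: memY => //; exact: leq_trans (leq_pred t) tN.
  have Hdiff : X t - X t.-1 = (X t ord0 i - X t.-1 ord0 i) *: 'e_i.
    apply/rowP => k; rewrite !mxE.
    case: (eqVneq k i) => [->|nki]; first by rewrite eqxx mulr1.
    by rewrite andbF mulr0; apply/eqP; rewrite subr_eq0; apply/eqP; exact: Hoth.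
  case: Hj => Hj; rewrite Hj in Hdiff.
    by rewrite scale1r in Hdiff; rewrite -Hdiff.
  by move: Hd; rewrite Hdiff scaleN1r -memvN.
have [T [fT sT]] := @extract_free _ _ _ Y (enum 'I_N.+1).
have szT : size T = m.
  move/eqP: fT; rewrite sT full dimvf size_map => <-.
  by rewrite /dim /= mul1n.
have uT : uniq T by apply: (@map_uniq _ _ Y); apply: free_uniq.
pose tT : m.-tuple 'I_N.+1 := Tuple (introT eqP szT).
exists (tnth tT); split.
  move=> a b Hab; apply/val_inj/eqP.
  rewrite -(nth_uniq ord0 _ _ uT) ?szT ?ltn_ord //.
  by move: Hab; rewrite !(tnth_nth ord0) => ->.
have -> : [seq X (tnth tT k) | k <- enum 'I_m] = map Y T.
  transitivity (map Y (map (tnth tT) (enum (ordinal m)))); first by rewrite -map_comp.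
  by rewrite map_tnth_enum.
by rewrite /basis_of fT sT full eqxx.
Qed.
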